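(* Let $a,b$ be real numbers with $0<a<b$. (1) There exists a proper algebraic subset $\Sigma\subset(\mathbb{R}^2)^3$ such that for every $(p_1,p_2,p_3)\in(\mathbb{R}^2)^3\setminus\Sigma$, with $p_i=(p_{i1},p_{i2})$, there is exactly one triple of constants $(c_1,c_2,c_3)$ with $c_i>0$ for which the ellipse $a(x_1-p_{11})^2+b(x_2-p_{12})^2=c_1$ and the two circles $(x_1-p_{i1})^2+(x_2-p_{i2})^2=c_i$ ($i=2,3$) are tangent at some point; moreover, for this triple the point of tangency is unique. (2) Let $\ell>3$. There exists a proper algebraic subset $\Sigma\subset(\mathbb{R}^2)^\ell$ such that for every $(p_1,\dots,p_\ell)\in(\mathbb{R}^2)^\ell\setminus\Sigma$, with $p_i=(p_{i1},p_{i2})$, and for all constants $c_1,\dots,c_\ell>0$, the ellipse $a(x_1-p_{11})^2+b(x_2-p_{12})^2=c_1$ and the $\ell-1$ circles $(x_1-p_{i1})^2+(x_2-p_{i2})^2=c_i$ ($2\le i\le \ell$) are not tangent at any point.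
   Context: Curves $\{F_i=c_i\}$, $i=1,\dots,k$, in the plane (given as level sets of smooth functions $F_i$ with non-vanishing gradient on them) are said to be tangent at a point $q$ if $q$ lies on all of them and they all have the same tangent line at $q$, i.e. the gradient vectors $\nabla F_1(q),\dots,\nabla F_k(q)$ span a space of dimension less than $2$. *)

(* Defs.v *)
From Stdlib Require Import Reals Lra List Arith.
Open Scope R_scope.

Inductive mpoly : Type :=
| PConst : R -> mpoly
| PVar : nat -> mpoly
| PAdd : mpoly -> mpoly -> mpoly
| PMul : mpoly -> mpoly -> mpoly.

Fixpoint peval (env : nat -> R) (P : mpoly) : R :=
  match P with
  | PConst c => c
  | PVar n => env n
  | PAdd P Q => peval env P + peval env Q
  | PMul P Q => peval env P * peval env Q
  end.

Fixpoint vars_lt (n : nat) (P : mpoly) : Prop :=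
  match P with
  | PConst _ => True
  | PVar k => (k < n)%nat
  | PAdd P Q => vars_lt n P /\ vars_lt n Q
  | PMul P Q => vars_lt n P /\ vars_lt n Q
  end.

(* A configuration (p_1,...,p_l) in (R^2)^l is a map p : nat -> R*R, of which only
   indices 0..l-1 matter; its coordinates are x_{2i} = fst (p i), x_{2i+1} = snd (p i). *)
Definition coords (p : nat -> R * R) (n : nat) : R :=
  if Nat.even n then fst (p (Nat.div2 n)) else snd (p (Nat.div2 n)).

Definition proper_algebraic_subset (l : nat) (S : (nat -> R * R) -> Prop) : Prop :=
  (exists Ps : list mpoly,
      (forall P, In P Ps -> vars_lt (2 * l) P) /\
      (forall p, S p <-> (forall P, In P Ps -> peval (coords p) P = 0))) /\
  (exists p, ~ S p).

Definition is_gradient (F : R * R -> R) (q : R * R) (g : R * R) : Prop :=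
  derivable_pt_lim (fun t => F (t, snd q)) (fst q) (fst g) /\
  derivable_pt_lim (fun t => F (fst q, t)) (snd q) (snd g).

(* The k curves {F_i = c_i}, i < k, are tangent at q: q lies on all of them and
   the gradients span a space of dimension < 2 (all 2x2 minors vanish). *)
Definition tangent_at (k : nat) (F : nat -> R * R -> R) (c : nat -> R) (q : R * R) : Prop :=
  (forall i, (i < k)%nat -> F i q = c i) /\
  exists g : nat -> R * R,
    (forall i, (i < k)%nat -> is_gradient (F i) q (g i)) /\
    (forall i j, (i < k)%nat -> (j < k)%nat ->
        fst (g i) * snd (g j) - snd (g i) * fst (g j) = 0).

Definition ellipse_fun (a b : R) (p : R * R) (x : R * R) : R :=
  a * (fst x - fst p) ^ 2 + b * (snd x - snd p) ^ 2.

Definition circle_fun (p : R * R) (x : R * R) : R :=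
  (fst x - fst p) ^ 2 + (snd x - snd p) ^ 2.

Definition curve_family (a b : R) (p : nat -> R * R) (i : nat) : R * R -> R :=
  match i with
  | O => ellipse_fun a b (p O)
  | S _ => circle_fun (p i)
  end.

(* Main.v *)
Require Import Defs.
From Stdlib Require Import Reals List Arith Lra Lia Psatz.
From Coquelicot Require Import Coquelicot.
Open Scope R_scope.

Lemma grad_ellipse a b p0 q g : is_gradient (ellipse_fun a b p0) q g ->
  g = (2*a*(fst q - fst p0), 2*b*(snd q - snd p0)).
Proof.
destruct g as [g1 g2]; destruct q as [q1 q2]; destruct p0 as [x0 y0].
unfold is_gradient, ellipse_fun; simpl; intros [H1 H2].
assert (D1 : derivable_pt_lim (fun t => a*(t-x0)^2 + b*(q2-y0)^2) q1 (2*a*(q1-x0))).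
{ apply is_derive_Reals. auto_derive; [exact I| ring]. }
assert (D2 : derivable_pt_lim (fun t => a*(q1-x0)^2 + b*(t-y0)^2) q2 (2*b*(q2-y0))).
{ apply is_derive_Reals. auto_derive; [exact I| ring]. }
f_equal; eapply uniqueness_limite; eauto.
Qed.

Lemma grad_circle p0 q g : is_gradient (circle_fun p0) q g ->
  g = (2*(fst q - fst p0), 2*(snd q - snd p0)).
Proof.
destruct g as [g1 g2]; destruct q as [q1 q2]; destruct p0 as [x0 y0].
unfold is_gradient, circle_fun; simpl; intros [H1 H2].
assert (D1 : derivable_pt_lim (fun t => (t-x0)^2 + (q2-y0)^2) q1 (2*(q1-x0))).
{ apply is_derive_Reals. auto_derive; [exact I| ring]. }
assert (D2 : derivable_pt_lim (fun t => (q1-x0)^2 + (t-y0)^2) q2 (2*(q2-y0))).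
{ apply is_derive_Reals. auto_derive; [exact I| ring]. }
f_equal; eapply uniqueness_limite; eauto.
Qed.

Lemma par_trans x1 x2 y1 y2 w1 w2 : (w1<>0 \/ w2<>0) -> x1*w2 - x2*w1 = 0 ->
  y1*w2 - y2*w1 = 0 -> x1*y2 - x2*y1 = 0.
Proof.
intros [Hw|Hw] Hx Hy.
- assert (E : w1*(x1*y2-x2*y1) = 0).
  { transitivity (-x1*(y1*w2-y2*w1) + y1*(x1*w2-x2*w1)); [ring| rewrite Hx, Hy; ring]. }
  destruct (Rmult_integral _ _ E); tauto.
- assert (E : w2*(x1*y2-x2*y1) = 0).
  { transitivity (y2*(x1*w2-x2*w1) - x2*(y1*w2-y2*w1)); [ring| rewrite Hx, Hy; ring]. }
  destruct (Rmult_integral _ _ E); tauto.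
Qed.

Lemma pos_nz w1 w2 : 0 < w1^2 + w2^2 -> w1 <> 0 \/ w2 <> 0.
Proof. intros H. destruct (Req_dec w1 0); [right; intro; subst; lra| left; auto]. Qed.

Definition Q1 a b x0 y0 u1 u2 v1 v2 :=
  let d1 := v1 - u1 in let d2 := v2 - u2 in
  (b*(d2*u1 - d1*u2) - (a*d2*x0 - b*d1*y0)) / ((b-a)*d2).
Definition Q2 a b x0 y0 u1 u2 v1 v2 :=
  let d1 := v1 - u1 in let d2 := v2 - u2 in
  (a*(d2*u1 - d1*u2) - (a*d2*x0 - b*d1*y0)) / ((b-a)*d1).

Lemma solve_sys a b x0 y0 u1 u2 v1 v2 q1 q2 : a < b -> v1 - u1 <> 0 -> v2 - u2 <> 0 ->
  (v2-u2)*q1 - (v1-u1)*q2 = (v2-u2)*u1 - (v1-u1)*u2 ->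
  a*(v2-u2)*q1 - b*(v1-u1)*q2 = a*(v2-u2)*x0 - b*(v1-u1)*y0 ->
  q1 = Q1 a b x0 y0 u1 u2 v1 v2 /\ q2 = Q2 a b x0 y0 u1 u2 v1 v2.
Proof.
intros Hab H1 H2 E1 E2. unfold Q1, Q2; cbv zeta.
assert (Hba : b - a <> 0) by lra.
apply Rminus_diag_eq in E1. apply Rminus_diag_eq in E2.
split; field_simplify_eq; try tauto; apply Rminus_diag_uniq.
- transitivity (b*((v2 - u2) * q1 - (v1 - u1) * q2 - ((v2 - u2) * u1 - (v1 - u1) * u2))
    - (a * (v2 - u2) * q1 - b * (v1 - u1) * q2 - (a * (v2 - u2) * x0 - b * (v1 - u1) * y0))); [ring| rewrite E1, E2; ring].
- transitivity ((a*((v2 - u2) * q1 - (v1 - u1) * q2 - ((v2 - u2) * u1 - (v1 - u1) * u2))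
    - (a * (v2 - u2) * q1 - b * (v1 - u1) * q2 - (a * (v2 - u2) * x0 - b * (v1 - u1) * y0)))); [ring| rewrite E1, E2; ring].
Qed.

Lemma grad_ellipse_ok a b p0 q : is_gradient (ellipse_fun a b p0) q
  (2*a*(fst q - fst p0), 2*b*(snd q - snd p0)).
Proof.
destruct q as [q1 q2]; destruct p0 as [x0 y0].
unfold is_gradient, ellipse_fun; simpl; split; apply is_derive_Reals;
  auto_derive; [exact I| ring| exact I| ring].
Qed.

Lemma grad_circle_ok p0 q : is_gradient (circle_fun p0) q
  (2*(fst q - fst p0), 2*(snd q - snd p0)).
Proof.
destruct q as [q1 q2]; destruct p0 as [x0 y0].
unfold is_gradient, circle_fun; simpl; split; apply is_derive_Reals;
  auto_derive; [exact I| ring| exact I| ring].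
Qed.

Lemma LQ a b x0 y0 u1 u2 v1 v2 : a < b -> v1 - u1 <> 0 -> v2 - u2 <> 0 ->
  (v2-u2)*Q1 a b x0 y0 u1 u2 v1 v2 - (v1-u1)*Q2 a b x0 y0 u1 u2 v1 v2 = (v2-u2)*u1 - (v1-u1)*u2.
Proof. intros. unfold Q1, Q2; cbv zeta. field. split; auto. lra. Qed.

Lemma MQ a b x0 y0 u1 u2 v1 v2 : a < b -> v1 - u1 <> 0 -> v2 - u2 <> 0 ->
  a*(v2-u2)*Q1 a b x0 y0 u1 u2 v1 v2 - b*(v1-u1)*Q2 a b x0 y0 u1 u2 v1 v2 = a*(v2-u2)*x0 - b*(v1-u1)*y0.
Proof. intros. unfold Q1, Q2; cbv zeta. field. split; auto. lra. Qed.

Definition X0 (p : nat -> R*R) := fst (p 0%nat).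
Definition Y0 (p : nat -> R*R) := snd (p 0%nat).
Definition U1 (p : nat -> R*R) := fst (p 1%nat).
Definition U2 (p : nat -> R*R) := snd (p 1%nat).
Definition V1 (p : nat -> R*R) := fst (p 2%nat).
Definition V2 (p : nat -> R*R) := snd (p 2%nat).
Definition QQ a b p := (Q1 a b (X0 p) (Y0 p) (U1 p) (U2 p) (V1 p) (V2 p),
                        Q2 a b (X0 p) (Y0 p) (U1 p) (U2 p) (V1 p) (V2 p)).

Lemma tangent_point a b p c q : 0 < a -> a < b ->
  V1 p - U1 p <> 0 -> V2 p - U2 p <> 0 ->
  (forall i, (i < 3)%nat -> 0 < c i) ->
  tangent_at 3 (curve_family a b p) c q -> q = QQ a b p.
Proof.
intros Ha Hab Hd1 Hd2 Hc [Hv [g [Hg Hm]]].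
pose proof (grad_ellipse a b (p 0%nat) q (g 0%nat) (Hg 0%nat ltac:(lia))) as G0.
pose proof (grad_circle (p 1%nat) q (g 1%nat) (Hg 1%nat ltac:(lia))) as G1.
pose proof (grad_circle (p 2%nat) q (g 2%nat) (Hg 2%nat ltac:(lia))) as G2.
pose proof (Hm 1%nat 2%nat ltac:(lia) ltac:(lia)) as M12.
pose proof (Hm 0%nat 1%nat ltac:(lia) ltac:(lia)) as M01.
pose proof (Hv 1%nat ltac:(lia)) as V1'. pose proof (Hc 1%nat ltac:(lia)) as C1.
simpl in V1'. rewrite <- V1' in C1. unfold circle_fun in C1.
rewrite G0, G1, G2 in *. simpl in M12, M01.
unfold QQ, X0, Y0, U1, U2, V1, V2 in *.
clear Hv Hg Hm G0 G1 G2 V1' Hc.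
revert Hd1 Hd2 M12 M01 C1.
destruct (p 0%nat) as [x0 y0], (p 1%nat) as [u1 u2], (p 2%nat) as [v1 v2], q as [q1 q2].
simpl. intros Hd1 Hd2 M12 M01 C1.
assert (E1 : (v2-u2)*q1 - (v1-u1)*q2 = (v2-u2)*u1 - (v1-u1)*u2) by nra.
assert (W : (q1 - u1) <> 0 \/ (q2 - u2) <> 0) by (apply pos_nz; lra).
assert (Hn : (a*(q1-x0))*(q2-u2) - (b*(q2-y0))*(q1-u1) = 0) by nra.
assert (Hdd : (v1-u1)*(q2-u2) - (v2-u2)*(q1-u1) = 0) by nra.
pose proof (par_trans _ _ _ _ _ _ W Hn Hdd) as P.
destruct (solve_sys a b x0 y0 u1 u2 v1 v2 q1 q2 Hab Hd1 Hd2 E1 ltac:(nra)) as [-> ->].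
reflexivity.
Qed.

Lemma pos_sum a b x y : 0 < a -> 0 < b -> (x <> 0 \/ y <> 0) -> 0 < a*x^2 + b*y^2.
Proof.
intros Ha Hb [H|H]; pose proof (Rlt_0_sqr _ H) as P; unfold Rsqr in P;
  assert (0 <= x^2) by nra; assert (0 <= y^2) by nra; nra.
Qed.

Lemma pos_sum1 x y : (x <> 0 \/ y <> 0) -> 0 < x^2 + y^2.
Proof. intros H. pose proof (pos_sum 1 1 x y Rlt_0_1 Rlt_0_1 H). lra. Qed.

Definition E0 (p : nat -> R*R) := (V2 p - U2 p)*(X0 p - U1 p) - (V1 p - U1 p)*(Y0 p - U2 p).
Definition E1 a b (p : nat -> R*R) := a*(V2 p - U2 p)*(U1 p - X0 p) - b*(V1 p - U1 p)*(U2 p - Y0 p).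
Definition E2 a b (p : nat -> R*R) := a*(V2 p - U2 p)*(V1 p - X0 p) - b*(V1 p - U1 p)*(V2 p - Y0 p).

Lemma exists_tangent a b p : 0 < a -> a < b ->
  V1 p - U1 p <> 0 -> V2 p - U2 p <> 0 -> E0 p <> 0 -> E1 a b p <> 0 -> E2 a b p <> 0 ->
  (forall i, (i < 3)%nat -> 0 < curve_family a b p i (QQ a b p)) /\
  tangent_at 3 (curve_family a b p) (fun i => curve_family a b p i (QQ a b p)) (QQ a b p).
Proof.
intros Ha Hab Hd1 Hd2 H0 H1 H2.
pose proof (LQ a b (X0 p) (Y0 p) (U1 p) (U2 p) (V1 p) (V2 p) Hab Hd1 Hd2) as L.
pose proof (MQ a b (X0 p) (Y0 p) (U1 p) (U2 p) (V1 p) (V2 p) Hab Hd1 Hd2) as M.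
set (q1 := Q1 a b (X0 p) (Y0 p) (U1 p) (U2 p) (V1 p) (V2 p)) in *.
set (q2 := Q2 a b (X0 p) (Y0 p) (U1 p) (U2 p) (V1 p) (V2 p)) in *.
assert (QE : QQ a b p = (q1, q2)) by reflexivity. rewrite QE.
split.
- intros i Hi. destruct i as [|[|[|i]]]; [| | |lia]; cbn [curve_family];
  unfold ellipse_fun, circle_fun; cbn [fst snd]; fold (X0 p) (Y0 p) (U1 p) (U2 p) (V1 p) (V2 p).
  + destruct (Req_dec q1 (X0 p)) as [Ea|Ea]; destruct (Req_dec q2 (Y0 p)) as [Eb|Eb];
      try (apply pos_sum; [lra|lra|]; ((left; lra) || (right; lra))).
    exfalso; apply H0; unfold E0; rewrite <- Ea, <- Eb; lra.
  + destruct (Req_dec q1 (U1 p)) as [Ea|Ea]; destruct (Req_dec q2 (U2 p)) as [Eb|Eb];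
      try (apply pos_sum1; ((left; unfold U1,U2,V1,V2 in *; lra) || (right; unfold U1,U2,V1,V2 in *; lra))).
    exfalso; apply H1; unfold E1; rewrite Ea, Eb in M; lra.
  + destruct (Req_dec q1 (V1 p)) as [Ea|Ea]; destruct (Req_dec q2 (V2 p)) as [Eb|Eb];
      try (apply pos_sum1; ((left; unfold U1,U2,V1,V2 in *; lra) || (right; unfold U1,U2,V1,V2 in *; lra))).
    exfalso; apply H2; unfold E2; rewrite Ea, Eb in M; lra.
- split; [intros; reflexivity|].
  exists (fun i => match i with
                   | O => (2*a*(q1 - X0 p), 2*b*(q2 - Y0 p))
                   | S _ => (2*(q1 - fst (p i)), 2*(snd (p i)) * 0 + 2*(q2 - snd (p i))) end).
  split.
  + intros i Hi. destruct i as [|i].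
    * exact (grad_ellipse_ok a b (p 0%nat) (q1, q2)).
    * replace (2 * snd (p (S i)) * 0 + 2 * (q2 - snd (p (S i)))) with (2 * (q2 - snd (p (S i)))) by ring.
      exact (grad_circle_ok (p (S i)) (q1, q2)).
  + assert (Par : forall i, (i < 3)%nat ->
      fst (match i with
                   | O => (2*a*(q1 - X0 p), 2*b*(q2 - Y0 p))
                   | S _ => (2*(q1 - fst (p i)), 2*(snd (p i)) * 0 + 2*(q2 - snd (p i))) end) * (V2 p - U2 p)
      - snd (match i with
                   | O => (2*a*(q1 - X0 p), 2*b*(q2 - Y0 p))
                   | S _ => (2*(q1 - fst (p i)), 2*(snd (p i)) * 0 + 2*(q2 - snd (p i))) end) * (V1 p - U1 p) = 0).
    { intros i Hi. destruct i as [|[|[|i]]]; [| | |lia]; simpl;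
      unfold X0, Y0, U1, U2, V1, V2 in *; nra. }
    intros i j Hi Hj. apply (par_trans _ _ _ _ (V1 p - U1 p) (V2 p - U2 p)); auto.
Qed.

Definition polyval a b p := (V1 p - U1 p)*(V2 p - U2 p)*E0 p*E1 a b p*E2 a b p.
Definition mS P Q := PAdd P (PMul (PConst (-1)) Q).
Definition Poly1 a b :=
  let x0 := PVar 0 in let y0 := PVar 1 in let u1 := PVar 2 in let u2 := PVar 3 in
  let v1 := PVar 4 in let v2 := PVar 5 in
  let d1 := mS v1 u1 in let d2 := mS v2 u2 in
  PMul (PMul (PMul (PMul d1 d2)
     (mS (PMul d2 (mS x0 u1)) (PMul d1 (mS y0 u2))))
     (mS (PMul (PMul (PConst a) d2) (mS u1 x0)) (PMul (PMul (PConst b) d1) (mS u2 y0))))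
     (mS (PMul (PMul (PConst a) d2) (mS v1 x0)) (PMul (PMul (PConst b) d1) (mS v2 y0))).

Lemma Poly1_eval a b p : peval (coords p) (Poly1 a b) = polyval a b p.
Proof. unfold polyval, E0, E1, E2, X0, Y0, U1, U2, V1, V2. simpl. unfold coords. simpl. ring. Qed.

Definition colv (p : nat -> R*R) :=
  (fst (p 2%nat) - fst (p 1%nat))*(snd (p 3%nat) - snd (p 1%nat))
  - (snd (p 2%nat) - snd (p 1%nat))*(fst (p 3%nat) - fst (p 1%nat)).
Definition Poly2 :=
  mS (PMul (mS (PVar 4) (PVar 2)) (mS (PVar 7) (PVar 3)))
     (PMul (mS (PVar 5) (PVar 3)) (mS (PVar 6) (PVar 2))).
Lemma Poly2_eval p : peval (coords p) Poly2 = colv p.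
Proof. unfold colv. simpl. unfold coords. simpl. ring. Qed.

Theorem corollary2p2 (a b : R) (Ha : 0 < a) (Hab : a < b) :
  (exists Sigma : (nat -> R * R) -> Prop,
     proper_algebraic_subset 3 Sigma /\
     forall p : nat -> R * R, ~ Sigma p ->
       exists c : nat -> R,
         (forall i, (i < 3)%nat -> 0 < c i) /\
         (exists q, tangent_at 3 (curve_family a b p) c q) /\
         (forall c' : nat -> R,
            (forall i, (i < 3)%nat -> 0 < c' i) ->
            (exists q, tangent_at 3 (curve_family a b p) c' q) ->
            forall i, (i < 3)%nat -> c' i = c i) /\
         (forall q q', tangent_at 3 (curve_family a b p) c q ->
                       tangent_at 3 (curve_family a b p) c q' -> q = q'))
  /\
  (forall l : nat, (3 < l)%nat ->
     exists Sigma : (nat -> R * R) -> Prop,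
       proper_algebraic_subset l Sigma /\
       forall p : nat -> R * R, ~ Sigma p ->
         forall c : nat -> R, (forall i, (i < l)%nat -> 0 < c i) ->
           forall q, ~ tangent_at l (curve_family a b p) c q).
Proof.
split.
- exists (fun p => polyval a b p = 0). split.
  + split.
    * exists (Poly1 a b :: nil). split.
      -- intros P [HP|[]]; subst P. simpl. repeat split; lia.
      -- intros p. rewrite <- Poly1_eval. split.
         ++ intros H P [HP|[]]; subst P; exact H.
         ++ intros H. apply H. left; reflexivity.
    * exists (fun n => match n with 0%nat => (0,0) | 1%nat => (0,1) | 2%nat => (1,2) | _ => (0,0) end).
      assert (E : polyval a b (fun n => match n with 0%nat => (0,0) | 1%nat => (0,1) | 2%nat => (1,2) | _ => (0,0) end) = -b*(a-2*b))
        by (unfold polyval, E0, E1, E2, X0, Y0, U1, U2, V1, V2; simpl; ring).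
      rewrite E. nra.
  + intros p HS.
    assert (Hd1 : V1 p - U1 p <> 0) by (intro H; apply HS; unfold polyval; rewrite H; ring).
    assert (Hd2 : V2 p - U2 p <> 0) by (intro H; apply HS; unfold polyval; rewrite H; ring).
    assert (H0 : E0 p <> 0) by (intro H; apply HS; unfold polyval; rewrite H; ring).
    assert (H1 : E1 a b p <> 0) by (intro H; apply HS; unfold polyval; rewrite H; ring).
    assert (H2 : E2 a b p <> 0) by (intro H; apply HS; unfold polyval; rewrite H; ring).
    destruct (exists_tangent a b p Ha Hab Hd1 Hd2 H0 H1 H2) as [Hpos Ht].
    exists (fun i => curve_family a b p i (QQ a b p)). split; [exact Hpos|]. split; [eauto|]. split.
    * intros c' Hc' [q' Hq'] i Hi.
      pose proof (tangent_point a b p c' q' Ha Hab Hd1 Hd2 Hc' Hq') as Eq.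
      destruct Hq' as [Hv _]. rewrite <- (Hv i Hi), Eq. reflexivity.
    * intros q q' Hq Hq'.
      rewrite (tangent_point a b p _ q Ha Hab Hd1 Hd2 Hpos Hq).
      rewrite (tangent_point a b p _ q' Ha Hab Hd1 Hd2 Hpos Hq'). reflexivity.
- intros l Hl. exists (fun p => colv p = 0). split.
  + split.
    * exists (Poly2 :: nil). split.
      -- intros P [HP|[]]; subst P. simpl. repeat split; lia.
      -- intros p. rewrite <- Poly2_eval. split.
         ++ intros H P [HP|[]]; subst P; exact H.
         ++ intros H. apply H. left; reflexivity.
    * exists (fun n => match n with 2%nat => (1,0) | 3%nat => (0,1) | _ => (0,0) end).
      unfold colv; simpl. lra.
  + intros p HS c Hc q [Hv [g [Hg Hm]]]. apply HS.
    pose proof (grad_circle (p 1%nat) q (g 1%nat) (Hg 1%nat ltac:(lia))) as G1.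
    pose proof (grad_circle (p 2%nat) q (g 2%nat) (Hg 2%nat ltac:(lia))) as G2.
    pose proof (grad_circle (p 3%nat) q (g 3%nat) (Hg 3%nat ltac:(lia))) as G3.
    pose proof (Hm 1%nat 2%nat ltac:(lia) ltac:(lia)) as M12.
    pose proof (Hm 1%nat 3%nat ltac:(lia) ltac:(lia)) as M13.
    pose proof (Hm 2%nat 3%nat ltac:(lia) ltac:(lia)) as M23.
    rewrite G1, G2, G3 in *. simpl in M12, M13, M23.
    unfold colv. clear - M12 M13 M23.
    revert M12 M13 M23.
    destruct (p 1%nat) as [u1 u2], (p 2%nat) as [v1 v2], (p 3%nat) as [w1 w2], q as [q1 q2].
    simpl. intros. nra.
Qed.
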